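(* For every $k\in\mathbb Z$, the series $\Psi^\pm_k:=R_\pm^k\Psi_0^\pm$ are given by \[ \Psi_k^+(x)=\gamma\sum_{j\ge0}x^{j+k}h_j(\beta^{-1}{\bf s})\rho_{j+k-1},\qquad \Psi_k^-(x)=\sum_{j\ge0}x^{j+k}h_j(-\beta^{-1}{\bf s})\rho^{-1}_{-j-k}. \]
   Context: Let $G(z)=1+\sum_{i\ge1}g_iz^i$ be a formal power series, $\beta,\gamma$ formal parameters, ${\bf s}=(s_1,s_2,\dots)$. $h_j({\bf s})$ are the complete symmetric functions in the variables $s_i$ via $\sum_jh_j({\bf s})z^j=\exp(\sum_is_iz^i)$, and $\pm\beta^{-1}{\bf s}=(\pm\beta^{-1}s_1,\pm\beta^{-1}s_2,\dots)$. With $r_\lambda=\prod_{(i,j)\in\lambda}G((j-i)\beta)$ (boxes $(i,j)$, $i$ = row, $j$ = column) and Schur functions written in ${\bf t}$ with $p_i=it_i$, let $\tau({\bf t})=\sum_\lambda\gamma^{|\lambda|}r_\lambda s_\lambda({\bf t})s_\lambda(\beta^{-1}{\bf s})$ and $\Psi_0^\pm(x)=\tau(\pm[x])$, $[x]=(x,x^2/2,\dots)$. Set $\rho_0=1$, $\rho_j=\gamma^j\prod_{i=1}^jG(i\beta)$ and $\rho_{-j}=\gamma^{-j}\prod_{i=0}^{j-1}G(-i\beta)^{-1}$ for $j\ge1$. $D=x\,d/dx$, and $R_\pm=\gamma xG(\pm\beta D)$ acts on formal Laurent series in $x$ (coefficients in $\mathbb Q[g_1,g_2,\dots][{\bf s}][\gamma,\gamma^{-1}]((\beta))$)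 by $R_\pm(x^j)=\gamma G(\pm\beta j)x^{j+1}$; it is invertible since each $G(\pm\beta j)$ is invertible, and $R_\pm^k$ for $k<0$ means the inverse power. *)

(* Defs.v *)
From HB Require Import structures.
From mathcomp Require Import all_boot all_order all_algebra.
Set Implicit Arguments. Unset Strict Implicit. Unset Printing Implicit Defensive.
Import Order.TTheory GRing.Theory Num.Theory.
Local Open Scope ring_scope.

Section Defs.
Variable C : comUnitRingType.

(* Complete homogeneous symmetric functions h_n(u) in the "times"
   u = (u 1, u 2, ...) (u 0 is ignored), defined by
   sum_n h_n z^n = exp(sum_i u_i z^i), i.e. via the equivalent recursion
   h_0 = 1,  n h_n = sum_{i=1}^n i u_i h_{n-i}  (obtained from H' = U' H). *)
Fixpoint hseq (V : lalgType C) (u : nat -> V) (n : nat) : seq V :=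
  match n with
  | 0 => [:: 1]
  | m.+1 => let l := hseq u m in
      rcons l (((m.+1)%:R : C)^-1 *:
               \sum_(i < m.+1) ((i.+1)%:R * u i.+1 * l`_(m - i)))
  end.

Definition hcomp (V : lalgType C) (u : nat -> V) (n : nat) : V := (hseq u n)`_n.

Definition hz (V : lalgType C) (u : nat -> V) (k : int) : V :=
  match k with Posz n => hcomp u n | Negz _ => 0 end.

(* Schur function s_lambda(u) by the Jacobi-Trudi formula
   det (h_{lambda_i - i + j}(u))_{i,j}, lambda given as a padded n-tuple. *)
Definition schur (V : lalgType C) (u : nat -> V) (n : nat) (l : 'I_n -> nat) : V :=
  \det (\matrix_(i < n, j < n) hz u ((l i)%:Z - (i : nat)%:Z + (j : nat)%:Z)).

Definition is_part (n : nat) (l : 'I_n -> nat) : bool :=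
  [forall i : 'I_n, forall j : 'I_n, (i <= j)%N ==> (l j <= l i)%N].

(* Gb m stands for G(m * beta). r_lambda = prod over boxes (i,j) of G((j-i) beta) *)
Definition rlam (Gb : int -> C) (n : nat) (l : 'I_n -> nat) : C :=
  \prod_(i < n) \prod_(j < l i) Gb ((j : nat)%:Z - (i : nat)%:Z).

Definition times_x (pm : bool) (i : nat) : {poly C} :=
  ((if pm then 1 else -1) * (i%:R : C)^-1) *: 'X^i.

Definition hC (u : nat -> C) (k : int) : C := @hz C^o u k.
Definition schurC (u : nat -> C) (n : nat) (l : 'I_n -> nat) : C := @schur C^o u n l.

(* Formal Laurent series in x are represented by their coefficient functions
   int -> C.  Psi0 pm = tau(+-[x]): coefficient of x^n is the (finite) sum of
   the x^n-coefficients of the terms gamma^|l| r_l s_l(+-[x]) s_l(beta^-1 s)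
   over all partitions l with |l| <= n (terms with |l| > n lie in x^{|l|}C[x]). *)
Definition Psi0 (gam bet : C) (Gb : int -> C) (s : nat -> C) (pm : bool) : int -> C :=
  fun N => match N with
  | Negz _ => 0
  | Posz n =>
      \sum_(l : {ffun 'I_n -> 'I_n.+1} |
              is_part (fun i => nat_of_ord (l i)) && (\sum_(i < n) nat_of_ord (l i) <= n)%N)
        gam ^+ (\sum_(i < n) nat_of_ord (l i))%N
        * rlam Gb (fun i => nat_of_ord (l i))
        * (schur (times_x pm) (fun i => nat_of_ord (l i)))`_n
        * schurC (fun i => bet^-1 * s i) (fun i => nat_of_ord (l i))
  end.

Definition rho (gam : C) (Gb : int -> C) (k : int) : C :=
  match k with
  | Posz j => gam ^+ j * \prod_(1 <= i < j.+1) Gb (i%:Z)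
  | Negz m => gam ^- m.+1 * \prod_(0 <= i < m.+1) (Gb (- (i%:Z)))^-1
  end.

(* R_+ (pm = true) and R_- (pm = false): R_pm (x^j) = gam G(+- beta j) x^(j+1) *)
Definition Rop (gam : C) (Gb : int -> C) (pm : bool) (f : int -> C) : int -> C :=
  fun n => gam * Gb ((if pm then 1 else -1) * (n - 1)) * f (n - 1).

Definition Rinv (gam : C) (Gb : int -> C) (pm : bool) (f : int -> C) : int -> C :=
  fun n => (gam * Gb ((if pm then 1 else -1) * n))^-1 * f (n + 1).

Definition Rpow (gam : C) (Gb : int -> C) (pm : bool) (k : int) (f : int -> C) : int -> C :=
  match k with
  | Posz m => iter m (Rop gam Gb pm) f
  | Negz m => iter m.+1 (Rinv gam Gb pm) f
  end.

End Defs.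

(* Main.v *)
Require Import Defs.
From HB Require Import structures.
From mathcomp Require Import all_boot all_order all_algebra zify ring.
Set Implicit Arguments. Unset Strict Implicit. Unset Printing Implicit Defensive.
Import Order.TTheory GRing.Theory Num.Theory.
Local Open Scope ring_scope.

Section S.
Variable C : comUnitRingType.

Lemma hseq_size (V : lalgType C) (u : nat -> V) m : size (hseq u m) = m.+1.
Proof. by elim: m => [|m IH] //=; rewrite size_rcons IH. Qed.

Lemma hseq_nth (V : lalgType C) (u : nat -> V) m j : (j <= m)%N -> (hseq u m)`_j = hcomp u j.
Proof.
elim: m j => [|m IH] j hj.
  by move: hj; rewrite leqn0 => /eqP ->.
rewrite leq_eqVlt in hj; case/orP: hj => [/eqP->|hj]; first by [].
rewrite /= nth_rcons hseq_size hj; exact: IH.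
Qed.

Lemma hcomp0 (V : lalgType C) (u : nat -> V) : hcomp u 0 = 1.
Proof. by []. Qed.

Lemma hcompS (V : lalgType C) (u : nat -> V) m : hcomp u m.+1 =
  ((m.+1)%:R : C)^-1 *: \sum_(i < m.+1) ((i.+1)%:R * u i.+1 * hcomp u (m - i)).
Proof.
rewrite /hcomp /= nth_rcons hseq_size ltnn eqxx; congr (_ *: _).
apply: eq_bigr => i _; rewrite hseq_nth //; exact: leq_subr.
Qed.
End S.

Section S.
Variable C : comUnitRingType.
Hypothesis hQ : forall n : nat, (n.+1)%:R \is a @GRing.unit C.

Lemma natscale (i : nat) (c : C) (p : {poly C}) : (i%:R : {poly C}) * (c *: p) = (i%:R * c) *: p.
Proof. by rewrite mulr_natl scalerMnl mulr_natl. Qed.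

Lemma natdiv (k : nat) (c : C) : ((k.+1)%:R : C) * (c / (k.+1)%:R) = c.
Proof. by rewrite mulrCA divrr // mulr1. Qed.

Lemma hplus m : hcomp (times_x C true) m = 'X^m.
Proof.
elim/ltn_ind: m => [[|m]] IH; first by rewrite hcomp0 expr0.
rewrite hcompS (eq_bigr (fun _ => 'X^(m.+1))).
  rewrite sumr_const card_ord -scaler_nat scalerA mulVr ?scale1r //.
move=> i _; rewrite /times_x natscale natdiv scale1r IH; last first.
  by rewrite ltnS leq_subr.
rewrite -exprD; congr (_ ^+ _); have := ltn_ord i; lia.
Qed.

Definition cm (m : nat) : C := if m == 0%N then 1 else if m == 1%N then -1 else 0.

Lemma hminus m : hcomp (times_x C false) m = (cm m)%:P * 'X^m.
Proof.
elim/ltn_ind: m => [[|[|m]]] IH; first by rewrite hcomp0 expr0 /cm /= mulr1.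
  rewrite hcompS big_ord1 /times_x natscale natdiv hcomp0 mulr1.
  by rewrite invr1 scale1r /cm /= scaleN1r polyCN mulN1r expr1.
rewrite hcompS 2!big_ord_recr /= big1 ?add0r; last first.
  move=> i _; rewrite IH; last by rewrite ltnS leq_subr.
  rewrite /cm.
  have -> : (m.+1 - i == 0)%N = false by apply/negbTE; rewrite subn_eq0 -ltnNge ltnS ltnW.
  have -> : (m.+1 - i == 1)%N = false.
    apply/negbTE; have := ltn_ord i; lia.
  by rewrite polyC0 !mul0r mulr0.
rewrite subSnn subnn !IH // /cm /= /times_x !natscale !natdiv.
rewrite !scaleN1r polyCN polyC1 polyC0 !mul1r mulN1r expr0 mulr1 mulrNN -exprD addn1 addrN.
by rewrite scaler0 mul0r.
Qed.
End S.

Section S.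
Variable C : comUnitRingType.

Definition hzc (c : nat -> C) (z : int) : C := match z with Posz m => c m | Negz _ => 0 end.

Lemma Posz_sum (I : finType) (F : I -> nat) : Posz (\sum_i F i)%N = \sum_i (Posz (F i)).
Proof. exact: (big_morph Posz PoszD (erefl (Posz 0))). Qed.

Lemma prod_homog (u : nat -> {poly C}) (c : nat -> C)
  (hu : forall m, hcomp u m = (c m)%:P * 'X^m) n (e : 'I_n -> int) (N : nat) :
  \sum_i e i = Posz N ->
  \prod_i hz u (e i) = (\prod_i hzc c (e i))%:P * 'X^N.
Proof.
move=> hsum.
case: (boolP [exists i, e i < 0]) => [/existsP [i0 hi0]|hall].
  rewrite (bigD1 i0) //= [in RHS](bigD1 i0) //=.
  by case: (e i0) hi0 => // p _; by rewrite /= !mul0r.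
have hpos : forall i, e i = Posz `|e i|%N.
  move=> i; case E: (e i) => [p|p] //; move/negP: hall; case; apply/existsP; exists i.
  by rewrite E.
rewrite (eq_bigr (fun i => (c `|e i|%N)%:P * 'X^(`|e i|%N))); last first.
  by move=> i _; rewrite [e i]hpos /= hu.
rewrite big_split /= rmorph_prod prodrXr; congr (_ * _).
  by apply: eq_bigr => i _; rewrite [e i]hpos.
congr ('X^ _); apply/eqP; rewrite -eqz_nat Posz_sum -hsum; apply/eqP.
by apply: eq_bigr => i _; rewrite -hpos.
Qed.

Lemma schur_homog (u : nat -> {poly C}) (c : nat -> C)
  (hu : forall m, hcomp u m = (c m)%:P * 'X^m) n (l : 'I_n -> nat) :
  schur u l = (\det (\matrix_(i < n, j < n) hzc c ((l i)%:Z - (i : nat)%:Z + (j : nat)%:Z)))%:P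
              * 'X^(\sum_i l i).
Proof.
rewrite /schur /determinant rmorph_sum mulr_suml; apply: eq_bigr => s _.
rewrite rmorphM /= rmorph_sign -mulrA; congr (_ * _).
under eq_bigr do rewrite mxE.
under [in RHS]eq_bigr do rewrite mxE.
have sinj : injective (perm.fun_of_perm.body s) := @perm.perm_inj _ s.
move: (perm.fun_of_perm.body s) sinj => f finj.
apply: (prod_homog hu).
rewrite Posz_sum big_split /= sumrB.
have -> : \sum_(i < n) ((i : nat) : int) = \sum_(i < n) ((f i : nat) : int).
  by rewrite (reindex_inj finj).
by rewrite subrK.
Qed.
End S.

Section S.
Variable C : comUnitRingType.
Hypothesis hQ : forall n : nat, (n.+1)%:R \is a @GRing.unit C.

Lemma hzE (V : lalgType C) (u : nat -> V) (x y : nat) :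
  hz u (x%:Z - y%:Z) = if (y <= x)%N then hcomp u (x - y) else 0.
Proof.
case: leqP => h; first by rewrite subzn.
have : x%:Z - y%:Z < 0 by rewrite subr_lt0 ltz_nat.
by case: (_ - _).
Qed.

Definition hh (u : nat -> C) (m : nat) : C := @hcomp C C^o u m.

Lemma hrec (u : nat -> C) m :
  (m.+1)%:R * hh u m.+1 = \sum_(i < m.+1) ((i.+1)%:R * u i.+1 * hh u (m - i)).
Proof.
rewrite /hh hcompS.
by rewrite [_ *: _]/(GRing.scale _ _) /= mulrA divrr // mul1r.
Qed.

Lemma trunc_mul (p q r : {poly C}) N :
  (forall m, (m < N)%N -> p`_m = q`_m) -> forall m, (m < N)%N -> (p * r)`_m = (q * r)`_m.
Proof.
move=> h m hm; rewrite !coefM; apply: eq_bigr => j _; rewrite h //.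
by apply: leq_ltn_trans hm; rewrite -ltnS.
Qed.

Lemma Xderiv_rec (u : nat -> C) N m : (m < N)%N ->
  ('X * (\poly_(j < N) hh u j)^`())`_m =
  (\poly_(j < N) (j%:R * u j) * \poly_(j < N) hh u j)`_m.
Proof.
move=> hm; rewrite coefXM coefM.
case: m hm => [|m] hm.
  by rewrite eqxx big_ord1 coef_poly hm mulr0n !mul0r.
rewrite [(_ == _)%N]/= succnK coef_deriv coef_poly hm big_ord_recl coef_poly /= mulr0n !mul0r.
rewrite (_ : (if (0 < N)%N then 0 else 0) = 0 :> C); last by case: ifP.
rewrite mul0r add0r.
rewrite -mulr_natl hrec; apply: eq_bigr => i _.
rewrite !(coef_poly (R:=C)) /bump leq0n add1n.
have hi : (i.+1 < N)%N by have := ltn_ord i; lia.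
have hi2 : (m - i < N)%N by have := ltn_ord i; lia.
by rewrite hi subSS hi2.
Qed.

Lemma conv_hh (v : nat -> C) n :
  \sum_(j < n.+1) hh v j * hh (fun i => - v i) (n - j) = (n == 0%N)%:R.
Proof.
case: n => [|n]; first by rewrite big_ord1 /hh !hcomp0 mulr1.
set N := n.+2.
set A := \poly_(j < N) hh v j.
set B := \poly_(j < N) hh (fun i => - v i) j.
set W := \poly_(j < N) (j%:R * v j).
have hA := @Xderiv_rec v N.
have hB : forall m, (m < N)%N -> ('X * B^`())`_m = (- W * B)`_m.
  have hW : \poly_(j < N) (j%:R * (- v j)) = - W.
    by apply/polyP => i; rewrite coefN !(coef_poly (R:=C)); case: ifP; rewrite ?oppr0 // mulrN.
  by move=> m hm; rewrite Xderiv_rec // hW.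
have key : ('X * (A * B)^`())`_n.+1 = 0.
  have -> : 'X * (A * B)^`() = ('X * A^`()) * B + ('X * B^`()) * A.
    by rewrite derivM; ring.
  rewrite coefD (trunc_mul B hA) // (trunc_mul A hB) //.
  rewrite -coefD (_ : W * A * B + - W * B * A = 0) ?coef0 //; ring.
move: key; rewrite coefXM /= coef_deriv => h.
have h0 : (A * B)`_n.+1 = 0.
  by rewrite -[LHS]mul1r -(mulVr (hQ n)) -mulrA mulr_natl h mulr0.
rewrite (_ : (n.+1 == 0)%:R = 0 :> C) //; transitivity ((A * B)`_n.+1); last exact: h0.
rewrite (coefM (R:=C)).
apply: eq_bigr => j _; rewrite !(coef_poly (R:=C)).
have hj := ltn_ord j.
have hj2 : (n.+1 - j < N)%N by rewrite /N; lia.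
by rewrite hj hj2.
Qed.
End S.

Section S.
Variable C : comUnitRingType.
Hypothesis hQ : forall n : nat, (n.+1)%:R \is a @GRing.unit C.

Definition Toep (u : nat -> C) N : 'M[C]_N :=
  \matrix_(i < N, j < N) (if (i <= j)%N then hh u (j - i) else 0).

Lemma Toep_mul (v : nat -> C) N : Toep v N *m Toep (fun i => - v i) N = 1%:M.
Proof.
apply/matrixP => i k; rewrite !mxE.
under eq_bigr do rewrite !mxE.
set F := fun j : nat => (if (i <= j)%N then hh v (j - i) else 0) *
   (if (j <= k)%N then hh (fun i => - v i) (k - j) else 0).
rewrite (eq_bigr (fun j : 'I_N => F j)) //.
rewrite -(big_mkord xpredT F) (@big_cat_nat _ _ _ i 0 N) //=; last exact: ltnW (ltn_ord i).
rewrite big_nat_cond big1 ?add0r; last first.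
  by move=> j /andP[/andP[_ hj] _]; rewrite /F leqNgt hj mul0r.
have hkN := ltn_ord k.
case: (ltnP k i) => hki.
  rewrite big_nat_cond big1; last first.
    move=> j /andP[/andP[hij _] _]; rewrite /F hij.
    by rewrite (_ : (j <= k)%N = false) ?mulr0 //; apply/negbTE; rewrite -ltnNge; lia.
  by rewrite (_ : (i == k) = false) //; apply/negbTE; apply/eqP => e; move: hki; rewrite e ltnn.
rewrite (@big_cat_nat _ _ _ k.+1 i N) //=; last exact: leqW.
rewrite [X in _ + X]big_nat_cond [X in _ + X]big1 ?addr0; last first.
  move=> j /andP[/andP[hkj _] _]; rewrite /F.
  by rewrite (_ : (j <= k)%N = false) ?mulr0 //; apply/negbTE; rewrite -ltnNge.
rewrite -{1}(add0n i) big_addn subSn // big_mkord.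
rewrite (eq_bigr (fun t : 'I_(k - i).+1 => hh v t * hh (fun i => - v i) ((k - i) - t))).
  rewrite conv_hh //; congr ((_ : bool)%:R); rewrite subn_eq0.
  by apply/idP/idP => [h|/eqP->//]; apply/eqP/val_inj => /=; lia.
move=> t _; rewrite /F leq_addl addnK.
have ht := ltn_ord t.
rewrite (_ : (t + i <= k)%N) //; last by lia.
congr (_ * hh _ _); lia.
Qed.

Lemma Toep_det (v : nat -> C) N : \det (Toep v N) = 1.
Proof.
rewrite -det_tr det_trig.
  by apply: big1 => i _; rewrite !mxE leqnn subnn /hh hcomp0.
by apply/is_trig_mxP => i j hij; rewrite !mxE leqNgt hij.
Qed.

Lemma hess_det (v : nat -> C) n :
  \det (\matrix_(i < n, j < n) (hz (V:=C^o) v (1%:Z - (i : nat)%:Z + (j : nat)%:Z) : C))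
  = (-1) ^+ n * hh (fun i => - v i) n.
Proof.
set P := Toep v n.+1.
have hadj : \adj P = Toep (fun i => - v i) n.+1.
  by rewrite -[\adj P]mulmx1 -(Toep_mul v n.+1) mulmxA mul_adj_mx Toep_det mul1mx.
have := congr1 (fun M : 'M_(n.+1) => M ord0 ord_max) hadj.
rewrite /= [in RHS]mxE leq0n subn0 => <-.
rewrite mxE /cofactor /= addn0 mulrA -exprMn mulrNN mulr1 expr1n mul1r.
congr (\det _); apply/matrixP => i j; rewrite !mxE lift_max lift0 /=.
rewrite (_ : (1%Z - (i:nat)%:Z + (j:nat)%:Z) = (j.+1)%:Z - (i:nat)%:Z); first by rewrite (hzE (V:=C^o)).
lia.
Qed.
End S.

Section S.
Variable C : comUnitRingType.
Hypothesis hQ : forall n : nat, (n.+1)%:R \is a @GRing.unit C.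
Variables (Gb : int -> C) (gam bet : C) (s : nat -> C).

Definition Mc (c : nat -> C) n (l : 'I_n -> nat) : 'M[C]_n :=
  \matrix_(i < n, j < n) hzc c ((l i)%:Z - (i : nat)%:Z + (j : nat)%:Z).

Lemma Psi0_gen pm (c : nat -> C)
  (hu : forall m, hcomp (times_x C pm) m = (c m)%:P * 'X^m) n
  (l0 : {ffun 'I_n -> 'I_n.+1}) :
  is_part (fun i => nat_of_ord (l0 i)) -> (\sum_i nat_of_ord (l0 i))%N = n ->
  (forall l : {ffun 'I_n -> 'I_n.+1}, is_part (fun i => nat_of_ord (l i)) ->
      (\sum_i nat_of_ord (l i))%N = n -> l != l0 ->
      \det (Mc c (fun i => nat_of_ord (l i))) = 0) ->
  Psi0 gam bet Gb s pm (Posz n) =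
  gam ^+ n * rlam Gb (fun i => nat_of_ord (l0 i)) * \det (Mc c (fun i => nat_of_ord (l0 i)))
  * schurC (fun i => bet^-1 * s i) (fun i => nat_of_ord (l0 i)).
Proof.
move=> hp0 hs0 hz0.
rewrite /Psi0 (bigD1 l0) /=; last by rewrite hp0 hs0 leqnn.
rewrite [X in _ + X = _]big1 ?addr0.
  rewrite hs0 (schur_homog hu) coefCM coefXn hs0 eqxx mulr1 //.
move=> l /andP[/andP[hp hs] hne].
rewrite (schur_homog hu) coefCM coefXn.
case: eqP => e.
  rewrite -/(Mc c _) hz0 //; first by rewrite mul0r mulr0 mul0r.
by rewrite mulr0 mulr0 mul0r.
Qed.
End S.

Section S.
Variable C : comUnitRingType.

Lemma is_partP n (l : 'I_n -> nat) : is_part l -> forall i j : 'I_n, (i <= j)%N -> (l j <= l i)%N.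
Proof. by move=> /forallP h i j hij; move/forallP: (h i) => /(_ j) /implyP; apply. Qed.

Lemma hzc1 (z : int) : 0 <= z -> hzc (fun _ => 1 : C) z = 1.
Proof. by case: z. Qed.

Definition l0p n : {ffun 'I_n -> 'I_n.+1} := [ffun i => if (val i == 0)%N then ord_max else ord0].

Lemma l0pE n (i : 'I_n) : nat_of_ord (l0p n i) = if (nat_of_ord i == 0)%N then n else 0%N.
Proof. by rewrite ffunE; case: ifP. Qed.

Lemma l0p_part n : is_part (fun i => nat_of_ord (l0p n i)).
Proof.
apply/forallP => i; apply/forallP => j; apply/implyP => hij; rewrite !l0pE.
case: eqP => hj; case: eqP => hi //; lia.
Qed.

Lemma l0p_sum n : (\sum_i nat_of_ord (l0p n i))%N = n.
Proof.
case: n => [|n]; first by rewrite big_ord0.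
rewrite big_ord_recl l0pE /= big1 ?addn0 // => i _; by rewrite l0pE.
Qed.

Lemma l0p_uniq n (l : {ffun 'I_n -> 'I_n.+1}) : is_part (fun i => nat_of_ord (l i)) ->
   (\sum_i nat_of_ord (l i))%N = n -> l != l0p n ->
   \det (Mc (fun _ => 1 : C) (fun i => nat_of_ord (l i))) = 0.
Proof.
move=> hp hs hne.
case: (boolP [exists i : 'I_n, (0 < i)%N && (0 < l i)%N]) => [/existsP [i /andP [hi0 hli]]|hall].
  have h1 : (1 < n)%N by have := ltn_ord i; lia.
  pose i0 : 'I_n := Ordinal (ltn_trans (ltnSn 0) h1).
  pose i1 : 'I_n := Ordinal h1.
  have hle : (nat_of_ord (l i) <= nat_of_ord (l i1))%N by apply: (is_partP hp).
  have hl1 : (0 < nat_of_ord (l i1))%N by lia.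
  apply: (determinant_alternate (i1 := i0) (i2 := i1)) => // j.
  by rewrite !mxE !hzc1 //=; lia.
exfalso; move/negP: hne; apply; apply/eqP/ffunP => i; apply/val_inj.
change (nat_of_ord (l i) = nat_of_ord (l0p n i)); rewrite l0pE; case: eqP => hi.
  move: hs; rewrite (bigD1 i) //= big1 ?addn0 // => j hj.
  apply/eqP; rewrite -leqn0 leqNgt; apply/negP => hlj; move/negP: hall; apply.
  apply/existsP; exists j; rewrite hlj andbT lt0n; apply/eqP => e; move/eqP: hj; apply.
  by apply/val_inj; rewrite /= e hi.
apply/eqP; rewrite -leqn0 leqNgt; apply/negP => hli; move/negP: hall; apply.
by apply/existsP; exists i; rewrite hli andbT lt0n; apply/eqP.
Qed.

Lemma l0p_rlam (Gb : int -> C) n :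
  rlam Gb (fun i => nat_of_ord (l0p n i)) = \prod_(j < n) Gb (j : nat)%:Z.
Proof.
rewrite /rlam; case: n => [|n]; first by rewrite !big_ord0.
rewrite big_ord_recl [X in _ * X]big1 ?mulr1.
  by rewrite l0pE /=; apply: eq_bigr => j _; congr Gb; lia.
by move=> i _; rewrite l0pE /= big_ord0.
Qed.

Lemma l0p_det n : \det (Mc (fun _ => 1 : C) (fun i => nat_of_ord (l0p n i))) = 1.
Proof.
rewrite -det_tr det_trig.
  apply: big1 => i _; rewrite !mxE hzc1 // l0pE.
  by case: ifP => _; lia.
apply/is_trig_mxP => i j hij; rewrite !mxE l0pE.
have -> : (nat_of_ord j == 0)%N = false by apply/negbTE; lia.
have : (0%:Z - (j : nat)%:Z + (i : nat)%:Z < 0) by lia.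
by case: (_ - _ + _).
Qed.

Lemma l0p_schur (v : nat -> C) n : schurC v (fun i => nat_of_ord (l0p n i)) = hh v n.
Proof.
rewrite /schurC /schur -det_tr det_trig.
  case: n => [|n]; first by rewrite big_ord0 /hh hcomp0.
  rewrite big_ord_recl big1 ?mulr1.
    by rewrite !mxE l0pE /= !addn0.
  by move=> i _; rewrite !mxE l0pE /= (_ : _ - _ + _ = 0%Z) //; lia.
apply/is_trig_mxP => i j hij; rewrite !mxE l0pE.
have -> : (nat_of_ord j == 0)%N = false by apply/negbTE; lia.
have : (0%:Z - (j : nat)%:Z + (i : nat)%:Z < 0) by lia.
by case: (_ - _ + _).
Qed.
End S.

Section S.
Variable C : comUnitRingType.
Hypothesis hQ : forall n : nat, (n.+1)%:R \is a @GRing.unit C.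

Definition l0m n : {ffun 'I_n -> 'I_n.+1} := [ffun i => inord 1].

Lemma l0mE n (i : 'I_n) : nat_of_ord (l0m n i) = 1%N.
Proof. rewrite ffunE inordK //; have := ltn_ord i; lia. Qed.

Lemma l0m_part n : is_part (fun i => nat_of_ord (l0m n i)).
Proof. by apply/forallP => i; apply/forallP => j; apply/implyP => _; rewrite !l0mE. Qed.

Lemma l0m_sum n : (\sum_i nat_of_ord (l0m n i))%N = n.
Proof. by rewrite (eq_bigr (fun _ => 1%N)) ?sum1_card ?card_ord // => i _; rewrite l0mE. Qed.

Lemma hzcm (z : int) : 2 <= z -> hzc (cm C) z = 0.
Proof.
case: z => // p hp; rewrite /= /cm.
have -> : (p == 0)%N = false by apply/negbTE; lia.
have -> : (p == 1)%N = false by apply/negbTE; lia.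
by [].
Qed.

Lemma l0m_uniq n (l : {ffun 'I_n -> 'I_n.+1}) : is_part (fun i => nat_of_ord (l i)) ->
   (\sum_i nat_of_ord (l i))%N = n -> l != l0m n ->
   \det (Mc (cm C) (fun i => nat_of_ord (l i))) = 0.
Proof.
move=> hp hs hne.
case: (boolP [exists i : 'I_n, (2 <= l i)%N]) => [/existsP [i hli]|hall].
  have h0 : (0 < n)%N by have := ltn_ord i; lia.
  pose i0 : 'I_n := Ordinal h0.
  have hle : (nat_of_ord (l i) <= nat_of_ord (l i0))%N by apply: (is_partP hp).
  rewrite (expand_det_row _ i0) big1 // => j _.
  by rewrite mxE hzcm ?mul0r //=; lia.
exfalso; move/negP: hne; apply; apply/eqP/ffunP => i; apply/val_inj.
change (nat_of_ord (l i) = nat_of_ord (l0m n i)); rewrite l0mE.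
have hle : forall j, (nat_of_ord (l j) <= 1)%N.
  move=> j; rewrite leqNgt; apply/negP => hj; move/negP: hall; apply.
  by apply/existsP; exists j.
have : (\sum_j (1 - nat_of_ord (l j)) == 0)%N.
  apply/eqP; apply/eqP; rewrite -(eqn_add2l n) addn0 -{1}hs -big_split /=.
  rewrite (eq_bigr (fun _ => 1%N)) ?sum1_card ?card_ord // => j _.
  by rewrite subnKC.
rewrite sum_nat_eq0 => /forallP /(_ i) /eqP.
by have := hle i; lia.
Qed.

Lemma l0m_rlam (Gb : int -> C) n :
  rlam Gb (fun i => nat_of_ord (l0m n i)) = \prod_(i < n) Gb (- (i : nat)%:Z).
Proof.
rewrite /rlam; apply: eq_bigr => i _; rewrite l0mE big_ord1.
by congr Gb; rewrite /=; lia.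
Qed.

Lemma l0m_det n : \det (Mc (cm C) (fun i => nat_of_ord (l0m n i))) = (-1) ^+ n.
Proof.
rewrite det_trig.
  rewrite (eq_bigr (fun _ => -1)) ?prodr_const ?card_ord // => i _.
  by rewrite mxE l0mE (_ : _ - _ + _ = 1%Z) //; lia.
apply/is_trig_mxP => i j hij; rewrite !mxE l0mE hzcm //; lia.
Qed.

Lemma l0m_schur (v : nat -> C) n :
  schurC v (fun i => nat_of_ord (l0m n i)) = (-1) ^+ n * hh (fun i => - v i) n.
Proof.
rewrite /schurC /schur -hess_det //; congr (\det _); apply/matrixP => i j.
by rewrite !mxE l0mE.
Qed.
End S.

Section S.
Variable C : comUnitRingType.
Hypothesis hQ : forall n : nat, (n.+1)%:R \is a @GRing.unit C.
Variables (Gb : int -> C) (gam bet : C) (s : nat -> C).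
Hypotheses (hG0 : Gb 0 = 1) (hGu : forall m : int, Gb m \is a GRing.unit)
  (hgam : gam \is a GRing.unit).

Lemma rho_unit m : rho gam Gb m \is a GRing.unit.
Proof.
case: m => [j|j] /=; rewrite unitrM.
  by rewrite unitrX //= unitr_prod.
by rewrite unitrV unitrX //= unitr_prod // => i _; rewrite unitrV.
Qed.

Lemma rho_step m : rho gam Gb m = gam * Gb m * rho gam Gb (m - 1).
Proof.
case: m => [[|j]|j].
- rewrite (_ : Posz 0 - 1 = Negz 0) // /rho expr0 big_geq // mul1r big_nat1.
  have -> : Gb (- (0%:Z)) = 1 by rewrite -hG0.
  by rewrite invr1 !mulr1 expr1 mulrV.
- rewrite (_ : Posz j.+1 - 1 = Posz j); last by lia.
  rewrite /rho big_nat_recr //= exprS; ring.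
- rewrite (_ : Negz j - 1 = Negz j.+1); last by rewrite !NegzE; lia.
  rewrite /rho [in RHS]big_nat_recr //= (exprS gam j.+1) invrM ?unitrX //.
  have -> : Gb (- (j.+1)%:Z) = Gb (Negz j) by rewrite NegzE.
  set P := \prod_(0 <= i < j.+1) _.
  rewrite [RHS](_ : _ = (gam * gam^-1) * (Gb (Negz j) * (Gb (Negz j))^-1) * (gam ^- j.+1 * P)).
    by rewrite !mulrV // !mul1r.
  ring.
Qed.

Definition vv := fun i => bet^-1 * s i.

Lemma Psi0_plus n : Psi0 gam bet Gb s true (Posz n) = gam ^+ n * (\prod_(j < n) Gb (j : nat)%:Z) * hh vv n.
Proof.
have hu : forall m, hcomp (times_x C true) m = ((fun _ => 1 : C) m)%:P * 'X^m.
  by move=> m; rewrite hplus // polyC1 mul1r.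
rewrite (Psi0_gen Gb gam bet s hu (l0p_part n) (l0p_sum n) (@l0p_uniq C n)).
by rewrite l0p_rlam l0p_det l0p_schur mulr1.
Qed.

Lemma Psi0_minus n : Psi0 gam bet Gb s false (Posz n) =
  gam ^+ n * (\prod_(i < n) Gb (- (i : nat)%:Z)) * hh (fun i => - vv i) n.
Proof.
rewrite (Psi0_gen Gb gam bet s (hminus hQ) (l0m_part n) (l0m_sum n) (@l0m_uniq C n)).
rewrite l0m_rlam l0m_det l0m_schur // /vv.
have hs : (-1) ^+ n * (-1) ^+ n = 1 :> C by rewrite -exprMn mulrNN mulr1 expr1n.
set h := hh _ n; set P := \prod_(i < n) _.
transitivity (gam ^+ n * P * h * ((-1) ^+ n * (-1) ^+ n)); first ring.
by rewrite hs mulr1.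
Qed.
End S.

Section S.
Variable C : comUnitRingType.
Hypothesis hQ : forall n : nat, (n.+1)%:R \is a @GRing.unit C.
Variables (Gb : int -> C) (gam bet : C) (s : nat -> C).
Hypotheses (hG0 : Gb 0 = 1) (hGu : forall m : int, Gb m \is a GRing.unit)
  (hgam : gam \is a GRing.unit).

Let v := fun i => bet^-1 * s i.
Let w := fun i => - (bet^-1 * s i).

Lemma base_p n : Psi0 gam bet Gb s true n = gam * hC v n * rho gam Gb (n - 1).
Proof.
case: n => [[|n]|n].
- rewrite Psi0_plus // expr0 big_ord0 !mul1r (_ : Posz 0 - 1 = Negz 0) //.
  rewrite /rho big_nat1 expr1 (_ : Gb (- 0%:Z) = 1) ?invr1 ?mulr1 ?mulrV //.
- rewrite Psi0_plus // (_ : Posz n.+1 - 1 = Posz n); last by lia.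
  rewrite /rho big_ord_recl /= (_ : Gb 0%:Z = 1) // mul1r.
  rewrite big_add1 /= big_mkord.
  rewrite (eq_bigr (fun i : 'I_n => Gb (i.+1)%:Z)) //.
  rewrite exprS /hh /v /vv /=; ring.
- by rewrite /Psi0 /hC /= mulr0 mul0r.
Qed.

Lemma base_m n : Psi0 gam bet Gb s false n = hC w n * (rho gam Gb (- n))^-1.
Proof.
case: n => [[|n]|n].
- rewrite Psi0_minus // expr0 big_ord0 !mul1r /rho /= expr0 big_geq // mul1r invr1.
  by [].
- rewrite Psi0_minus // (_ : - Posz n.+1 = Negz n); last by rewrite NegzE.
  rewrite /rho invrM ?unitrV ?unitrX ?unitr_prod // ?invrK; last by move=> i _; rewrite unitrV.
  rewrite prodrV ?invrK; last by move=> i _.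
  rewrite big_mkord /hC /w /hh /vv /=; ring.
- by rewrite /Psi0 /hC /= mul0r.
Qed.
End S.

Theorem proposition5p8 (C : comUnitRingType)
  (hQ : forall n : nat, (n.+1)%:R \is a @GRing.unit C)
  (Gb : int -> C) (hG0 : Gb 0 = 1) (hGu : forall m : int, Gb m \is a GRing.unit)
  (gam bet : C) (hgam : gam \is a GRing.unit) (hbet : bet \is a GRing.unit)
  (s : nat -> C) (k : int) :
  (forall n : int,
     Rpow gam Gb true k (Psi0 gam bet Gb s true) n =
     (if 0 <= n - k then gam * hC (fun i => bet^-1 * s i) (n - k) * rho gam Gb (n - 1)
      else 0))
  /\
  (forall n : int,
     Rpow gam Gb false k (Psi0 gam bet Gb s false) n =
     (if 0 <= n - k then hC (fun i => - (bet^-1 * s i)) (n - k) * (rho gam Gb (- n))^-1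
      else 0)).
Proof.
have hstep := rho_step hG0 hGu hgam.
have hunit := rho_unit hGu hgam.
have gGu : forall m, gam * Gb m \is a GRing.unit by move=> m; rewrite unitrM hgam hGu.
split.
  suff H : forall n, Rpow gam Gb true k (Psi0 gam bet Gb s true) n =
      gam * hC (fun i => bet^-1 * s i) (n - k) * rho gam Gb (n - 1).
    by move=> n; rewrite H; case: (n - k) => p //=; rewrite mulr0 mul0r.
  case: k => [m|m].
    elim: m => [|m IH] n; first by rewrite /= subr0 base_p.
    rewrite /Rpow in IH *; rewrite iterS /Rop IH /= mul1r.
    rewrite (hstep (n - 1)) (_ : n - 1 - m%:Z = n - (m.+1)%:Z); last by lia.
    ring.
  have H : forall j n, iter j (Rinv gam Gb true) (Psi0 gam bet Gb s true) n =
      gam * hC (fun i => bet^-1 * s i) (n + j) * rho gam Gb (n - 1).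
    elim=> [|j IH] n; first by rewrite /= addr0 base_p.
    rewrite iterS /Rinv IH /= mul1r (_ : n + 1 - 1 = n); last by lia.
    rewrite (hstep n) (_ : n + 1 + j = n + j.+1); last by lia.
    transitivity (((gam * Gb n)^-1 * (gam * Gb n)) *
       (gam * hC (fun i => bet^-1 * s i) (n + j.+1) * rho gam Gb (n - 1))); first ring.
    by rewrite mulVr ?mul1r.
  by move=> n; rewrite /Rpow H (_ : n - Negz m = n + m.+1) //; rewrite NegzE; lia.
suff H : forall n, Rpow gam Gb false k (Psi0 gam bet Gb s false) n =
    hC (fun i => - (bet^-1 * s i)) (n - k) * (rho gam Gb (- n))^-1.
  by move=> n; rewrite H; case: (n - k) => p //=; rewrite mul0r.
case: k => [m|m].
  elim: m => [|m IH] n; first by rewrite /= subr0 base_m.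
  rewrite /Rpow in IH *; rewrite iterS /Rop IH /= mulN1r.
  rewrite (hstep (- (n - 1))) (_ : - (n - 1) - 1 = - n); last by lia.
  rewrite (_ : n - 1 - m%:Z = n - (m.+1)%:Z); last by lia.
  rewrite invrM ?hunit //.
  transitivity ((gam * Gb (- (n - 1))) * (gam * Gb (- (n - 1)))^-1 *
     (hC (fun i => - (bet^-1 * s i)) (n - (m.+1)%:Z) * (rho gam Gb (- n))^-1)); first ring.
  by rewrite mulrV ?mul1r.
have H : forall j n, iter j (Rinv gam Gb false) (Psi0 gam bet Gb s false) n =
    hC (fun i => - (bet^-1 * s i)) (n + j) * (rho gam Gb (- n))^-1.
  elim=> [|j IH] n; first by rewrite /= addr0 base_m.
  rewrite iterS /Rinv IH /= mulN1r (_ : - (n + 1) = - n - 1); last by lia.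
  rewrite (hstep (- n)) (_ : n + 1 + j = n + j.+1); last by lia.
  rewrite !invrM ?hunit ?gGu ?hGu //; ring.
by move=> n; rewrite /Rpow H (_ : n - Negz m = n + m.+1) //; rewrite NegzE; lia.
Qed.
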